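(* Let $L$ be a finite distributive lattice, let $m$ be the maximum size of an antichain in $\operatorname{Mi}(L)$, and put $Q_L(x)=\sum_{k=0}^m q_k(L)x^k$ and $D_L^-(x)=\sum_{k=0}^m d_k^-(L)x^k$. Then $$Q_L(-1)=q_0(L)-q_1(L)+q_2(L)-q_3(L)+\cdots=D_L^-(0)=1,$$ and $$\left.\frac{\mathrm{d}Q_L(x)}{\mathrm{d}x}\right|_{x=-1}=\left.\frac{\mathrm{d}D_L^-(x)}{\mathrm{d}x}\right|_{x=0}=d_1^-(L)=|\operatorname{Mi}(L)|.$$
   Context: $\operatorname{Mi}(L)$ is the set of meet-irreducible elements of $L$, as a poset under the order of $L$. For a finite lattice $M$ and $k\ge0$, $q_k(M)$ is the number of convex sublattices (intervals) of $M$ isomorphic to the Boolean lattice $\mathbf{B}_k$ with $2^k$ elements. For $a\in M$, $\deg^-_M(a)$ is the number of elements of $M$ covering $a$, and $d_k^-(M)$ is the number of $a\in M$ with $\deg^-_M(a)=k$. *)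

(* Defs.v *)
From HB Require Import structures.
From mathcomp Require Import all_boot all_order all_algebra.
Set Implicit Arguments. Unset Strict Implicit. Unset Printing Implicit Defensive.
Import Order.Theory GRing.Theory.

Section LatticeDefs.
Context {disp : Order.disp_t} {L : finTBDistrLatticeType disp}.
Local Open Scope order_scope.

Definition covers (a b : L) : bool :=
  (a < b) && [forall c : L, ~~ ((a < c) && (c < b))].

Definition deg_down (a : L) : nat := #|[set b : L | covers a b]|.

Definition dk (k : nat) : nat := #|[set a : L | deg_down a == k]|.

Definition meet_irr (a : L) : bool :=
  (a != \top) && [forall x : L, forall y : L, (x `&` y == a) ==> ((a == x) || (a == y))].

Definition Mi : {set L} := [set a : L | meet_irr a].

Definition Mi_antichain (A : {set L}) : bool :=
  (A \subset Mi) && [forall x in A, forall y in A, (x != y) ==> ~~ (x >=< y)].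

Definition width_Mi : nat := \max_(A : {set L} | Mi_antichain A) #|A|.

(* the interval [a,b] is order-isomorphic (hence lattice-isomorphic) to the
   Boolean lattice B_k = ({set 'I_k}, \subset), with 2^k elements *)
Definition interval_is_boolean (k : nat) (a b : L) : bool :=
  [exists f : {ffun {set 'I_k} -> L},
     [forall X : {set 'I_k}, forall Y : {set 'I_k}, (X \subset Y) == (f X <= f Y)] &&
     [forall x : L, ((a <= x) && (x <= b)) == (x \in codom f)]].

Definition qk (k : nat) : nat :=
  #|[set p : L * L | (p.1 <= p.2) && interval_is_boolean k p.1 p.2]|.

End LatticeDefs.

Local Open Scope ring_scope.
Definition QL {disp : Order.disp_t} (L : finTBDistrLatticeType disp) : {poly int} :=
  \poly_(k < (@width_Mi disp L).+1) ((@qk disp L k)%:R).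
Definition DL {disp : Order.disp_t} (L : finTBDistrLatticeType disp) : {poly int} :=
  \poly_(k < (@width_Mi disp L).+1) ((@dk disp L k)%:R).

(* Main.v *)
Require Import Defs.
From HB Require Import structures.
From mathcomp Require Import all_boot all_order all_algebra.
Import Order.Theory GRing.Theory.
Set Implicit Arguments. Unset Strict Implicit. Unset Printing Implicit Defensive.


Section Lat.
Context {disp : Order.disp_t} {L : finTBDistrLatticeType disp}.
Local Open Scope order_scope.
Implicit Types a b c x y z : L.

Lemma coversP a c : covers a c -> a < c /\ forall z, a < z -> z < c -> False.
Proof. by move=> /andP[ac /forallP H]; split=> // z az zc; move: (H z); rewrite az zc. Qed.

Lemma meet_cov a c x : covers a c -> a <= x -> ~~ (c <= x) -> x `&` c = a.
Proof.
move=> /coversP[ac H] ax ncx.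
have h1 : a <= x `&` c by rewrite lexI ax ltW.
have h2 : x `&` c < c.
  by rewrite lt_neqAle leIr andbT; apply: contra ncx => /eqP <-; exact: leIl.
rewrite le_eqVlt in h1; case/orP: h1 => [/eqP <-//|h1]; by case: (H _ h1 h2).
Qed.

Lemma cov_le a c c' : covers a c -> covers a c' -> c <= c' -> c = c'.
Proof.
move=> /coversP[ac _] /coversP[_ H]; rewrite le_eqVlt => /orP[/eqP //|cc'].
by case: (H _ ac cc').
Qed.

Lemma cov_meet a c c' : covers a c -> covers a c' -> c != c' -> c' `&` c = a.
Proof.
move=> ca ca' ne; apply: meet_cov => //; first by case: (coversP ca') => /ltW.
by apply: contra ne => /(cov_le ca ca') ->.
Qed.

Lemma card_le_proper y z : y < z -> (#|[set u : L | (u <= y)%O]| < #|[set u : L | (u <= z)%O]|)%N.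
Proof.
move=> yz; apply: proper_card; apply/properP; split.
  by apply/subsetP => u; rewrite !inE => uy; exact: le_trans uy (ltW yz).
by exists z; rewrite !inE ?lexx // lt_geF.
Qed.

Lemma exists_cover a x : a < x -> exists c, covers a c && (c <= x).
Proof.
move=> ax.
have Px : (fun z => (a < z) && (z <= x)) x by rewrite /= ax lexx.
case: (@arg_minnP _ x (fun z => (a < z) && (z <= x)) (fun z => #|[set y | y <= z]|) Px) => c /andP[ac cx] cmin.
exists c; rewrite cx andbT /covers ac /=; apply/forallP => z; apply/negP => /andP[az zc].
have := cmin z; rewrite az (le_trans (ltW zc) cx) => /(_ isT).
by rewrite leqNgt; move/negP; apply; apply: card_le_proper.
Qed.

Lemma deg_top : deg_down (\top : L) = 0%N.
Proof.
apply/eqP; rewrite cards_eq0; apply/eqP/setP => b; rewrite !inE /covers.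
by rewrite lt_neqAle le1x eq_sym; case: eqP.
Qed.

Lemma deg_nontop a : a != \top -> (0 < deg_down a)%N.
Proof.
move=> nt; have : a < \top by rewrite lt_neqAle nt lex1.
case/exists_cover => c /andP[ca _]; rewrite card_gt0; apply/set0Pn; exists c; by rewrite inE.
Qed.

Lemma d0 : dk (L:=L) 0 = 1%N.
Proof.
rewrite /dk (_ : [set a : L | _] = [set \top]) ?cards1 //; apply/setP => a; rewrite !inE.
case: (eqVneq a \top) => [->|nt]; first by rewrite deg_top.
by rewrite eqn0Ngt deg_nontop.
Qed.

Lemma d1 : dk (L:=L) 1 = #|Mi (L:=L)|.
Proof.
rewrite /dk /Mi; apply: eq_card => a; rewrite !inE; apply/idP/idP.
- move=> Hd.
  have nt : a != \top by apply: contraTneq Hd => ->; rewrite deg_top.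
  move: Hd; rewrite /deg_down; case/cards1P => c Hc.
  have cov c' : covers a c' -> c' = c by move=> h; apply/set1P; rewrite -Hc inE.
  have c_cov : covers a c by rewrite -inE Hc set11.
  rewrite /meet_irr nt /=; apply/forallP => x; apply/forallP => y; apply/implyP => /eqP xy.
  apply/negPn/negP; rewrite negb_or => /andP[ax ay].
  have ax' : a < x by rewrite lt_neqAle ax -xy leIl.
  have ay' : a < y by rewrite lt_neqAle ay -xy leIr.
  case: (exists_cover ax') => c1 /andP[/cov -> cx].
  case: (exists_cover ay') => c2 /andP[/cov -> cy].
  have : c <= a by rewrite -xy lexI cx cy.
  by case: (coversP c_cov) => /lt_geF ->.
- case/andP => nt /forallP H.
  rewrite /deg_down; apply/cards1P.
  have ht : a < \top by rewrite lt_neqAle nt lex1.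
  case/exists_cover: ht => c /andP[cc _].
  exists c; apply/setP => c'; rewrite !inE; apply/idP/eqP => [cc'|->//].
  apply/eqP; apply: contraT => ne.
  move: (H c) => /forallP/(_ c')/implyP; rewrite (cov_meet cc' cc ne) eqxx => /(_ isT).
  by case/orP => /eqP ac; [case: (coversP cc) | case: (coversP cc')] => + _; rewrite -ac ltxx.
Qed.

Definition mx a c : L :=
  fintype.arg_max a (fun z => (a <= z) && ~~ (c <= z)) (fun z => #|[set y : L | y <= z]|).

Lemma mxP a c : covers a c ->
  [/\ a <= mx a c, ~~ (c <= mx a c) & forall x, a <= x -> mx a c < x -> c <= x].
Proof.
move=> cc; have [ac _] := coversP cc.
have Pa : (fun z => (a <= z) && ~~ (c <= z)) a by rewrite /= lexx lt_geF.
rewrite /mx; case: (@arg_maxnP _ a (fun z => (a <= z) && ~~ (c <= z)) (fun z => #|[set y : L | y <= z]|) Pa).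
move=> m /andP[am ncm] mmax; split=> // x ax mx'; apply: contraT => ncx.
by have := mmax x; rewrite ax ncx => /(_ isT); rewrite /geq /= leqNgt (card_le_proper mx').
Qed.

Lemma mx_Mi a c : covers a c -> mx a c \in Mi.
Proof.
move=> cc; have [am ncm H] := mxP cc; rewrite inE /meet_irr.
have -> /= : mx a c != \top by apply: contra ncm => /eqP ->; exact: lex1.
apply/forallP => x; apply/forallP => y; apply/implyP => /eqP xy.
apply/negPn/negP; rewrite negb_or => /andP[mx' my].
have mx2 : mx a c < x by rewrite lt_neqAle mx' -xy leIl.
have my2 : mx a c < y by rewrite lt_neqAle my -xy leIr.
have cx := H x (le_trans am (ltW mx2)) mx2.
have cy := H y (le_trans am (ltW my2)) my2.
by move: ncm; rewrite -xy lexI cx cy.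
Qed.

Lemma mx_other a c c' : covers a c -> covers a c' -> c != c' -> c' <= mx a c.
Proof.
move=> cc cc' ne; have [am ncm H] := mxP cc; apply: contraT => nc'm.
have h : c <= mx a c `|` c'.
  apply: H; first exact: lexUl.
  rewrite lt_neqAle leUl andbT; apply: contra nc'm => /eqP ->; exact: leUr.
have : c = a.
  rewrite -(meet_idPl h) meetUr meetC (meet_cov cc am ncm).
  by rewrite (cov_meet cc' cc) ?joinxx // eq_sym.
by move=> ca; case: (coversP cc); rewrite ca ltxx.
Qed.

Lemma deg_le_width a : (deg_down a <= width_Mi (L:=L))%N.
Proof.
set C := [set c | covers a c].
have inj : {in C &, injective (mx a)}.
  move=> c c'; rewrite !inE => cc cc' e; apply/eqP; apply: contraT => ne.
  by move: (mx_other cc cc' ne); case: (mxP cc') => _ + _; rewrite -e => /negbTE ->.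
rewrite /deg_down -/C -(card_in_imset inj) /width_Mi.
apply: (leq_bigmax_cond (F := fun A : {set L} => #|A|)).
rewrite /Mi_antichain; apply/andP; split.
  by apply/subsetP => z /imsetP[c]; rewrite inE => cc ->; exact: mx_Mi.
apply/forallP => x; apply/implyP => /imsetP[c]; rewrite inE => cc ->.
apply/forallP => y; apply/implyP => /imsetP[c']; rewrite inE => cc' ->.
apply/implyP => ne.
have ne' : c != c' by apply: contra ne => /eqP ->.
rewrite /Order.comparable negb_or; apply/andP; split; apply/negP => le.
  by case: (mxP cc') => _ + _ => /negP; apply; apply: le_trans le; apply: mx_other.
by case: (mxP cc) => _ + _ => /negP; apply; apply: le_trans le; apply: mx_other => //; rewrite eq_sym.
Qed.

Definition Cv a : {set L} := [set c | covers a c].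
Definition J a (S : {set L}) : L := a `|` \join_(c in S) c.

Lemma meet_joins x (S : {set L}) : x `&` \join_(c in S) c = \join_(c in S) (x `&` c).
Proof. by apply: (big_morph (fun y => x `&` y)); [exact: meetUr | exact: meetx0]. Qed.

Lemma J_ge a (S : {set L}) : a <= J a S. Proof. exact: leUl. Qed.

Lemma le_J a (S : {set L}) c : c \in S -> c <= J a S.
Proof. by move=> cS; apply: lexUr; apply: (@joins_sup _ _ _ c (mem S) (fun c => c)). Qed.

Lemma J_le a (S : {set L}) u : a <= u -> {in S, forall c, c <= u} -> J a S <= u.
Proof. by move=> au H; rewrite leUx au; apply/joinsP => c cS; apply: H. Qed.

Lemma J_mono a (S T : {set L}) : S \subset T -> J a S <= J a T.
Proof. by move=> ST; apply: J_le => [|c cS]; [exact: J_ge | apply: le_J; apply: (subsetP ST)]. Qed.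

Lemma cov_le_J a c (S : {set L}) : S \subset Cv a -> covers a c -> (c <= J a S) = (c \in S).
Proof.
move=> sub cc; apply/idP/idP; last exact: le_J.
move=> h; apply: contraT => ncS.
have : c <= a.
  rewrite -(meet_idPl h) meetUr leUx leIr /= meet_joins; apply/joinsP => c' c'S.
  have cc' : covers a c' by move: (subsetP sub c' c'S); rewrite inE.
  rewrite (cov_meet cc' cc) //; apply: contraNneq ncS => <-; exact: c'S.
by case: (coversP cc) => /lt_geF ->.
Qed.

Lemma J_sub a (S : {set L}) x : S \subset Cv a -> a <= x -> x <= J a S ->
  x = J a [set c in S | c <= x].
Proof.
move=> sub ax xJ; apply/le_anti/andP; split; last first.
  by apply: J_le => // c; rewrite inE => /andP[_ ->].
rewrite -{1}(meet_idPl xJ) meetUr meet_joins leUx; apply/andP; split.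
  exact: le_trans (leIr _ _) (J_ge _ _).
apply/joinsP => c cS.
have cc : covers a c by move: (subsetP sub c cS); rewrite inE.
case: (boolP (c <= x)) => cx.
  by apply: le_trans (leIr _ _) _; apply: le_J; rewrite inE cS cx.
by rewrite (meet_cov cc ax cx) J_ge.
Qed.

Lemma bool_of a (S : {set L}) : S \subset Cv a -> interval_is_boolean #|S| a (J a S).
Proof.
move=> sub.
pose g : 'I_#|S| -> L := fun i => enum_val i.
have ginj : injective g by apply: enum_val_inj.
have gS i : g i \in S by apply: enum_valP.
have gC i : covers a (g i) by move: (subsetP sub _ (gS i)); rewrite inE.
have gsub (X : {set 'I_#|S|}) : g @: X \subset Cv a.
  by apply/subsetP => z /imsetP[i _ ->]; rewrite inE.
apply/existsP; exists [ffun X : {set 'I_#|S|} => J a (g @: X)]; apply/andP; split.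
  apply/forallP => X; apply/forallP => Y; rewrite !ffunE; apply/eqP; apply/idP/idP.
    by move=> XY; apply: J_mono; apply: imsetS.
  move=> le; apply/subsetP => i iX.
  have : g i <= J a (g @: Y).
    by apply: le_trans le; apply: le_J; apply: imset_f.
  by rewrite (cov_le_J (gsub Y) (gC i)) mem_imset.
apply/forallP => x; apply/eqP; apply/idP/idP.
  case/andP => ax xJ; rewrite (J_sub sub ax xJ); apply/codomP.
  exists [set i | g i <= x]; rewrite ffunE; congr (J a _).
  apply/setP => c; rewrite inE; apply/andP/imsetP.
    by case=> cS cx; exists (enum_rank_in cS c); rewrite ?inE /g enum_rankK_in.
  by case=> i; rewrite inE => gix ->.
case/codomP => X ->; rewrite ffunE J_ge /=; apply: J_mono.
by apply/subsetP => z /imsetP[i _ ->].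
Qed.

Lemma bool_to a b k : a <= b -> interval_is_boolean k a b ->
  exists2 S : {set L}, (S \subset Cv a) && (#|S| == k) & b = J a S.
Proof.
move=> ab /existsP[f /andP[/forallP emb /forallP cod]].
have embP (X Y : {set 'I_k}) : (X \subset Y) = (f X <= f Y) by apply/eqP; move/forallP: (emb X) => /(_ Y).
have codP x : ((a <= x) && (x <= b)) = (x \in codom f) by apply/eqP.
have finj : injective f.
  by move=> X Y e; apply/eqP; rewrite eqEsubset !embP e lexx.
have inI X : (a <= f X) && (f X <= b) by rewrite codP codom_f.
have f0 : f set0 = a.
  have : a \in codom f by rewrite -codP lexx ab.
  case/codomP => X0 aX0.
  have : f X0 <= f set0 by rewrite -aX0; case/andP: (inI set0).
  by rewrite -embP subset0 => /eqP X00; rewrite aX0 X00.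
have fT : f setT = b.
  have : b \in codom f by rewrite -codP lexx ab.
  case/codomP => B0 bB0.
  have : f setT <= f B0 by rewrite -bB0; case/andP: (inI setT).
  by rewrite -embP subTset => /eqP B0T; rewrite bB0 B0T.
have cov i : covers a (f [set i]).
  rewrite /covers -f0 lt_neqAle -embP sub0set andbT.
  have ne0 : ([set i] == set0) = false by apply/eqP => /setP/(_ i); rewrite !inE eqxx.
  rewrite (inj_eq finj) eq_sym ne0 /=.
  apply/forallP => z; apply/negP => /andP[h1 h2].
  have : z \in codom f.
    rewrite -codP -f0 (ltW h1) /=; apply: le_trans (ltW h2) _.
    by case/andP: (inI [set i]).
  case/codomP => Z zZ; move: h1 h2; rewrite zZ !lt_neqAle -!embP.
  rewrite !(inj_eq finj) => /andP[n0 _] /andP[n1 /[dup] Zs].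
  by rewrite subset1 (negbTE n1) eq_sym (negbTE n0).
exists ((fun i => f [set i]) @: [set: 'I_k]).
  apply/andP; split.
    by apply/subsetP => z /imsetP[i _ ->]; rewrite inE.
  rewrite card_imset ?cardsT ?card_ord //.
  by move=> i j /finj /set1_inj.
rewrite -fT; apply/le_anti/andP; split; last first.
  apply: J_le; first by rewrite -f0 -embP sub0set.
  by move=> z /imsetP[i _ ->]; rewrite -embP subsetT.
have : J a ((fun i => f [set i]) @: [set: 'I_k]) \in codom f.
  rewrite -codP J_ge /=; apply: J_le => // z /imsetP[i _ ->].
  by case/andP: (inI [set i]).
case/codomP => Y eY; rewrite eY -embP subTset eqEsubset subsetT /=.
apply/subsetP => i _.
have : f [set i] <= f Y by rewrite -eY; apply: le_J; apply: imset_f; rewrite inE.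
by rewrite -embP sub1set.
Qed.

Lemma count_bool a k :
  #|[set b | (a <= b) && interval_is_boolean k a b]| = 'C(deg_down a, k).
Proof.
rewrite /deg_down -cards_draws.
rewrite (_ : [set b | _] = J a @: [set S : {set L} | S \subset Cv a & #|S| == k]).
  apply: card_in_imset => S T; rewrite !inE => /andP[sS _] /andP[sT _] e.
  apply/setP => c; apply/idP/idP => cin.
    have cc : covers a c by move: (subsetP sS c cin); rewrite inE.
    by rewrite -(cov_le_J sT cc) -e (cov_le_J sS cc).
  have cc : covers a c by move: (subsetP sT c cin); rewrite inE.
  by rewrite -(cov_le_J sS cc) e (cov_le_J sT cc).
apply/setP => b; rewrite inE; apply/andP/imsetP.
  by case=> ab bo; case: (bool_to ab bo) => S hS ->; exists S; rewrite ?inE.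
case=> S; rewrite inE => /andP[sub /eqP <-] ->; split; [exact: J_ge | exact: bool_of].
Qed.

Lemma qk_sum k : qk (L:=L) k = (\sum_(a : L) 'C(deg_down a, k))%N.
Proof.
rewrite /qk; under eq_bigr => a _ do rewrite -count_bool.
transitivity (\sum_(a : L) \sum_(b : L | (a <= b)%O && interval_is_boolean k a b) 1)%N.
  by rewrite pair_big_dep /= -sum1_card; apply: eq_bigl => -[x y]; rewrite !inE.
by apply: eq_bigr => a _; rewrite -sum1_card; apply: eq_bigl => b; rewrite inE.
Qed.

End Lat.

Unset Implicit Arguments.
Local Open Scope ring_scope.

Lemma alt0 (d N : nat) : (d <= N)%N ->
  \sum_(i < N.+1) ('C(d, i)%:R * (-1) ^+ i : int) = (d == 0%N)%:R.
Proof.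
move=> dN.
rewrite -(big_mkord xpredT (fun i => 'C(d,i)%:R * (-1)^+i : int)).
rewrite (@big_cat_nat _ _ _ d.+1) //=.
rewrite [X in _ + X]big1_seq ?addr0; last first.
  by move=> i /andP[_]; rewrite mem_index_iota => /andP[di _]; rewrite bin_small // mul0r.
rewrite big_mkord.
have := exprBn (1 : int) 1 d; rewrite subrr expr0n => ->.
by apply: eq_bigr => i _; rewrite !expr1n !mulr1 mulr_natl.
Qed.

Lemma alt1 (d N : nat) : (d <= N)%N ->
  \sum_(i < N) ('C(d, i.+1)%:R * i.+1%:R * (-1) ^+ i : int) = (d == 1%N)%:R.
Proof.
case: d => [|d] dN.
  by rewrite big1 // => i _; rewrite bin0n !mul0r.
case: N dN => [//|N] dN.
under eq_bigr => i _ do rewrite -natrM mulnC -mul_bin_diag natrM /= -mulrA.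
rewrite -mulr_sumr alt0 //; by case: d {dN} => [|d]; rewrite ?mulr1 ?mulr0.
Qed.

Section Main.
Variables (disp : Order.disp_t) (L : finTBDistrLatticeType disp).

Lemma dk_big k : (width_Mi (L:=L) < k)%N -> dk (L:=L) k = 0%N.
Proof.
move=> mk; apply/eqP; rewrite cards_eq0; apply/eqP/setP => a; rewrite !inE.
by apply/negbTE; rewrite neq_ltn (leq_ltn_trans (deg_le_width a) mk).
Qed.

Lemma qk_big k : (width_Mi (L:=L) < k)%N -> qk (L:=L) k = 0%N.
Proof.
move=> mk; rewrite qk_sum big1 // => a _; rewrite bin_small //.
exact: leq_ltn_trans (deg_le_width a) mk.
Qed.

Lemma coefD k : (DL L)`_k = (dk (L:=L) k)%:R.
Proof. by rewrite coef_poly; case: ltnP => // h; rewrite dk_big. Qed.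

Lemma coefQ k : (QL L)`_k = (qk (L:=L) k)%:R.
Proof. by rewrite coef_poly; case: ltnP => // h; rewrite qk_big. Qed.

Lemma dk_sum k : (dk (L:=L) k)%:R = \sum_(a : L) ((deg_down a == k)%:R : int).
Proof.
rewrite /dk -sum1_card big_mkcond natr_sum; apply: eq_bigr => a _.
by rewrite inE; case: (_ == _).
Qed.

End Main.

Theorem corollary9 (disp : Order.disp_t) (L : finTBDistrLatticeType disp) :
  [/\ (QL L).[-1] = (DL L).[0], (DL L).[0] = 1,
      (QL L)^`().[-1] = (DL L)^`().[0],
      (DL L)^`().[0] = (@dk disp L 1%N)%:R
    & @dk disp L 1%N = #|@Mi disp L|].
Proof.
set m := width_Mi (L:=L).
have D0 : (DL L).[0] = (dk (L:=L) 0)%:R by rewrite horner_coef0 coefD.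
have D1 : (DL L)^`().[0] = (dk (L:=L) 1)%:R by rewrite horner_coef0 coef_deriv coefD.
split => //; last exact: d1.
- rewrite D0 dk_sum (horner_coef_wide _ (size_poly _ _)).
  under eq_bigr => i _ do rewrite coefQ qk_sum natr_sum mulr_suml.
  rewrite exchange_big /=; apply: eq_bigr => a _.
  by rewrite alt0 // deg_le_width.
- by rewrite D0 d0.
- rewrite D1 dk_sum.
  have hs : (size (QL L)^`() <= m.+1)%N.
    case: (eqVneq (QL L) 0) => [->|nz]; first by rewrite deriv0 size_poly0.
    exact: leq_trans (ltnW (lt_size_deriv nz)) (size_poly _ _).
  rewrite (horner_coef_wide _ hs).
  under eq_bigr => i _ do rewrite coef_deriv coefQ qk_sum natr_sum -sumrMnl mulr_suml.
  rewrite exchange_big /=; apply: eq_bigr => a _.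
  rewrite -(@alt1 _ m.+1); last by apply: leq_trans (deg_le_width a) _.
  by apply: eq_bigr => i _; rewrite mulr_natr.
Qed.
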